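(* For an integer $\ell\ge 2$, let $G_\ell$ be the graph obtained from the disjoint union of $\ell$ copies of $K_3$ by adding one new vertex adjacent to all $3\ell$ vertices of these copies. Then $G_\ell$ is planar and $\dim_l(G_\ell)=2\ell$. Consequently, there exist connected planar graphs $G$ with $\dim_l(G)>\left\lceil \frac{n(G)+1}{2}\right\rceil$.
   Context: All graphs are finite and simple; $n(G)$ is the number of vertices. For vertices $x,y$ of a connected graph $G$, $d_G(x,y)$ is the length of a shortest $x,y$-path. A vertex $w$ distinguishes vertices $u,v$ if $d_G(u,w)\neq d_G(v,w)$. A set $W\subseteq V(G)$ is a local resolving set of $G$ if for every pair of adjacent vertices $u,v\in V(G)\setminus W$ some vertex of $W$ distinguishes $u$ and $v$. The local metric dimension $\dim_l(G)$ is the minimum cardinality of a local resolving set of $G$. *)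

(* Defs.v *)
From HB Require Import structures.
From mathcomp Require Import all_boot all_order all_algebra.
From mathcomp Require Import all_classical all_reals topology normedtype.
From mathcomp Require Import Rstruct Rstruct_topology.
Set Implicit Arguments. Unset Strict Implicit. Unset Printing Implicit Defensive.
Import Order.TTheory GRing.Theory Num.Theory.

Definition simple_graph (T : finType) (e : rel T) : Prop :=
  irreflexive e /\ symmetric e.

Definition graph_connected (T : finType) (e : rel T) : Prop :=
  forall x y : T, connect e x y.

Fixpoint reachn (T : finType) (e : rel T) (n : nat) (x y : T) : bool :=
  match n with
  | 0 => x == y
  | n'.+1 => reachn e n' x y || [exists z, reachn e n' x z && e z y]
  end.

(* d_G(x,y): least n such that there is an x,y-walk of length n (for a
   connected graph this is < #|T|). *)
Definition dist (T : finType) (e : rel T) (x y : T) : nat :=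
  find (fun n => reachn e n x y) (iota 0 #|T|).

Definition distinguishes (T : finType) (e : rel T) (w u v : T) : bool :=
  dist e u w != dist e v w.

Definition local_resolving (T : finType) (e : rel T) (W : {set T}) : bool :=
  [forall u, forall v,
     [&& u \notin W, v \notin W & e u v] ==>
     [exists w in W, distinguishes e w u v]].

(* local metric dimension: minimum cardinality of a local resolving set
   (V(G) itself is always one, so #|T| is a valid initial bound). *)
Definition local_metric_dim (T : finType) (e : rel T) : nat :=
  \big[minn/#|T|]_(W : {set T} | local_resolving e W) #|W|.

Local Open Scope classical_set_scope.
Local Open Scope ring_scope.

Definition planar (T : finType) (e : rel T) : Prop :=
  exists (p : T -> (Rdefinitions.R * Rdefinitions.R)%type) (arc : T -> T -> Rdefinitions.R -> (Rdefinitions.R * Rdefinitions.R)%type),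
    injective p /\
    (forall u v, e u v ->
       [/\ {within `[0, 1], continuous (arc u v)},
           {in `[0, 1] &, injective (arc u v)},
           arc u v 0 = p u, arc u v 1 = p v &
           forall t, 0 < t < 1 -> forall x, arc u v t != p x]) /\
    (forall u v u' v', e u v -> e u' v' -> [set u; v]%SET != [set u'; v']%SET ->
       forall s t : Rdefinitions.R, 0 <= s <= 1 -> 0 <= t <= 1 ->
         arc u v s = arc u' v' t -> exists x, arc u v s = p x).

(* G_l : l disjoint triangles plus an apex (None) adjacent to all 3l vertices *)
Definition Gl_vertex (l : nat) : finType := option ('I_l * 'I_3)%type.

Definition Gl_adj (l : nat) : rel (Gl_vertex l) :=
  fun x y =>
    match x, y with
    | None, None => false
    | None, Some _ => true
    | Some _, None => true
    | Some (i, a), Some (j, b) => (i == j) && (a != b)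
    end.

(* Main.v *)
From Pilot Require Import Defs.
From mathcomp Require Import all_boot all_order.
From HB Require Import structures.
From mathcomp Require Import all_algebra.
From mathcomp Require Import all_classical all_reals topology normedtype.
From mathcomp Require Import Rstruct Rstruct_topology ring lra zify.
Import Order.TTheory GRing.Theory Num.Theory.
Import numFieldNormedType.Exports.
Import Pilot.Defs.
Set Implicit Arguments. Unset Strict Implicit. Unset Printing Implicit Defensive.

Notation o0 := (@Ordinal 3 0 isT).
Notation o1 := (@Ordinal 3 1 isT).
Notation o2 := (@Ordinal 3 2 isT).

Section Planar.
Local Open Scope ring_scope.
Notation R := Rdefinitions.R.

Lemma ord3P (a : 'I_3) : [\/ a = o0, a = o1 | a = o2].
Proof.
case: a => [[|[|[|m]]] H] //; [constructor 1|constructor 2|constructor 3]; exact: val_inj.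
Qed.

Definition xw (a : 'I_3) : R := if (a : nat) == 1%N then 1 else 2.
Definition sw (n : nat) (a : 'I_3) : R := 3 * n%:R + (a : nat)%:R.

Definition qq l (u v : Gl_vertex l) : R * R :=
  match u with
  | Some (i, a) => (xw a, sw i a)
  | None => match v with Some (i, a) => (0, sw i a) | None => (0, 0) end
  end.
Definition lerp (P Q : R * R) (t : R) : R * R :=
  ((1 - t) * P.1 + t * Q.1, (1 - t) * P.2 + t * Q.2).
Definition Phi (z : R * R) : R * R := (z.1, z.1 * z.2).
Definition pp l (u : Gl_vertex l) := Phi (qq u u).
Definition arcc l (u v : Gl_vertex l) (t : R) := Phi (lerp (qq u v) (qq v u) t).

Definition gcanon l (u v : Gl_vertex l) : bool :=
  match u, v with
  | None, Some _ => true
  | Some (i, a), Some (j, b) => (i == j) && (a < b)%N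
  | _, _ => false
  end.

Lemma canon_or l (u v : Gl_vertex l) : Gl_adj u v -> gcanon u v \/ gcanon v u.
Proof.
case: u => [[i a]|]; case: v => [[j b]|] //=; try by [left|right].
case/andP=> /eqP <-; rewrite eqxx /=.
by case: (ord3P a) => ->; case: (ord3P b) => -> //= _; first [by left | by right].
Qed.

Lemma lerp_flip P Q t : lerp P Q t = lerp Q P (1 - t).
Proof. rewrite /lerp; congr (_, _); ring. Qed.

Lemma ltR (i j : nat) : (i < j)%N -> i%:R + 1 <= j%:R :> R.
Proof. by move=> h; rewrite natr1 ler_nat. Qed.

Ltac tri i j :=
  case: (ltngtP i j) => Hij;
  [ have := ltR Hij | have := ltR Hij | have Eij : i = j by apply: val_inj ];
  [ move=> ? | move=> ? | subst j ].

Ltac weq := rewrite /qq /lerp /xw /sw /=; congr (_, _); lra.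
Ltac wit k := first [ exists (Some (k, o0)); weq | exists (Some (k, o1)); weq
                    | exists (Some (k, o2)); weq ].
Ltac leaf Hset k := first [ by rewrite eqxx in Hset | exfalso; lra | wit k ].

Lemma core_canon l (u v u' v' : Gl_vertex l) s t :
  gcanon u v -> gcanon u' v' -> [set u; v]%SET != [set u'; v']%SET ->
  0 <= s <= 1 -> 0 <= t <= 1 ->
  lerp (qq u v) (qq v u) s = lerp (qq u' v') (qq v' u') t ->
  exists x : Gl_vertex l, lerp (qq u v) (qq v u) s = qq x x.
Proof.
move=> C1 C2 Hset /andP[s0 s1] /andP[t0 t1].
case: u v C1 Hset => [[i a]|] [[j b]|] //= C1;
case: u' v' C2 => [[i' a']|] [[j' b']|] //= C2 Hset.
- move/andP: C1 => [/eqP Ej ab]; subst j.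
  move/andP: C2 => [/eqP Ej ab']; subst j'.
  case: (ord3P a) ab Hset => ->; case: (ord3P b) => -> //= _;
  case: (ord3P a') ab' => ->; case: (ord3P b') => -> //= _ Hset;
  rewrite /lerp /qq /xw /sw /= => -[E1 E2]; tri i i'; leaf Hset i.
- move/andP: C1 => [/eqP Ej ab]; subst j.
  case: (ord3P a) ab Hset => ->; case: (ord3P b) => -> //= _;
  case: (ord3P b') => -> Hset;
  rewrite /lerp /qq /xw /sw /= => -[E1 E2]; tri i j'; leaf Hset i.
- move/andP: C2 => [/eqP Ej ab']; subst j'.
  case: (ord3P b) Hset => ->;
  case: (ord3P a') ab' => ->; case: (ord3P b') => -> //= _ Hset;
  rewrite /lerp /qq /xw /sw /= => -[E1 E2]; tri j i'; leaf Hset j.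
- case: (ord3P b) Hset => ->; case: (ord3P b') => -> Hset;
  rewrite /lerp /qq /xw /sw /= => -[E1 E2]; tri j j'; leaf Hset j.
Qed.

End Planar.

Section Planar2.
Local Open Scope ring_scope.
Notation R := Rdefinitions.R.
Ltac tri i j :=
  case: (ltngtP i j) => Hij;
  [ have := ltR Hij | have := ltR Hij | have Eij : i = j by apply: val_inj ];
  [ move=> ? | move=> ? | subst j ].

Ltac weq := rewrite /qq /lerp /xw /sw /=; congr (_, _); lra.
Ltac wit k := first [ exists (Some (k, o0)); weq | exists (Some (k, o1)); weq
                    | exists (Some (k, o2)); weq ].
Ltac leaf Hset k := first [ by rewrite eqxx in Hset | exfalso; lra | wit k ].

Lemma nonvert_canon l (u v : Gl_vertex l) (t : R) (w : 'I_l * 'I_3) :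
  gcanon u v -> 0 < t < 1 -> lerp (qq u v) (qq v u) t = qq (Some w) (Some w) -> False.
Proof.
move=> C1 /andP[t0 t1]; case: w => k c.
case: u v C1 => [[i a]|] [[j b]|] //= C1.
- move/andP: C1 => [/eqP Ej ab]; subst j.
  case: (ord3P a) ab => ->; case: (ord3P b) => -> //= _;
  case: (ord3P c) => ->;
  rewrite /lerp /qq /xw /sw /= => -[E1 E2]; tri i k; lra.
- case: (ord3P b) => ->; case: (ord3P c) => ->;
  rewrite /lerp /qq /xw /sw /= => -[E1 E2]; tri j k; lra.
Qed.

Lemma xw_ge1 a : 1 <= xw a.
Proof. rewrite /xw; case: ifP => _; lra. Qed.

Lemma set2C (T : finType) (a b : T) : [set a; b]%SET = [set b; a]%SET.
Proof. exact: finset.setUC. Qed.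

Lemma core l (u v u' v' : Gl_vertex l) (s t : R) :
  Gl_adj u v -> Gl_adj u' v' -> [set u; v]%SET != [set u'; v']%SET ->
  0 <= s <= 1 -> 0 <= t <= 1 ->
  lerp (qq u v) (qq v u) s = lerp (qq u' v') (qq v' u') t ->
  exists x : Gl_vertex l, lerp (qq u v) (qq v u) s = qq x x.
Proof.
move=> A1 A2 Hs Is It E.
have Is' : 0 <= 1 - s <= 1 by move/andP: Is => [? ?]; apply/andP; split; lra.
have It' : 0 <= 1 - t <= 1 by move/andP: It => [? ?]; apply/andP; split; lra.
case: (canon_or A1) => C1; case: (canon_or A2) => C2.
- exact: core_canon C1 C2 Hs Is It E.
- rewrite (lerp_flip (qq u' v')) in E.
  by apply: core_canon C1 C2 _ Is It' E; rewrite (set2C v' u').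
- rewrite lerp_flip in E *.
  by apply: core_canon C1 C2 _ Is' It E; rewrite (set2C v u).
- rewrite lerp_flip (lerp_flip (qq u' v')) in E *.
  by apply: core_canon C1 C2 _ Is' It' E; rewrite (set2C v u) (set2C v' u').
Qed.

Lemma nonvert l (u v : Gl_vertex l) (t : R) (w : 'I_l * 'I_3) :
  Gl_adj u v -> 0 < t < 1 -> lerp (qq u v) (qq v u) t = qq (Some w) (Some w) -> False.
Proof.
move=> A It E; case: (canon_or A) => C.
- exact: nonvert_canon C It E.
- rewrite lerp_flip in E; apply: nonvert_canon C _ E.
  by move/andP: It => [? ?]; apply/andP; split; lra.
Qed.

Lemma lerp1_pos l (u v : Gl_vertex l) (t : R) :
  Gl_adj u v -> 0 < t < 1 -> 0 < (lerp (qq u v) (qq v u) t).1.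
Proof.
move=> A /andP[t0 t1].
case: u v A => [[i a]|] [[j b]|] //= _; rewrite /lerp /=.
- have := xw_ge1 a; have := xw_ge1 b; nra.
- have := xw_ge1 a; nra.
- have := xw_ge1 b; nra.
Qed.

Lemma qq_ends l (u v : Gl_vertex l) : Gl_adj u v ->
  (qq u v).1 = (qq v u).1 -> 0 < (qq u v).1 /\ (qq u v).2 != (qq v u).2.
Proof.
case: u v => [[i a]|] [[j b]|] //=.
- case/andP=> /eqP <-; case: (ord3P a) => ->; case: (ord3P b) => -> //= _;
  rewrite /xw /sw /= => E; split; try lra; apply/eqP; lra.
- rewrite /xw; case: ifP => _ _; lra.
- rewrite /xw; case: ifP => _ _; lra.
Qed.

Lemma aff_inj (a b s t : R) : a != b -> (1 - s) * a + s * b = (1 - t) * a + t * b -> s = t.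
Proof.
move=> ab E.
have H : (s - t) * (a - b) = 0.
  have -> : (s - t) * (a - b) = ((1 - t) * a + t * b) - ((1 - s) * a + s * b) by ring.
  by rewrite E subrr.
move/eqP: H; rewrite mulf_eq0 => /orP[/eqP H|/eqP H]; first lra.
by move: ab; rewrite -subr_eq0 H eqxx.
Qed.

Lemma add_cont (f g : R -> R) : continuous f -> continuous g -> continuous (fun t => f t + g t).
Proof. move=> hf hg x. have := (@continuousD R R^o _ f g x (hf x) (hg x)). exact. Qed.
Lemma mul_cont (f g : R -> R) : continuous f -> continuous g -> continuous (fun t => f t * g t).
Proof. move=> hf hg x. have := (@continuousM R _ f g x (hf x) (hg x)). exact. Qed.
Lemma cst_cont (c : R) : continuous (fun _ : R => c).
Proof. move=> x; exact: cvg_cst. Qed.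
Lemma id_cont : continuous (fun t : R => t).
Proof. move=> x; exact: cvg_id. Qed.
Lemma aff_cont (a b : R) : continuous (fun t : R => (1 - t) * a + t * b).
Proof.
have -> : (fun t : R => (1 - t) * a + t * b) = (fun t => a + t * (b - a)).
  by apply: funext => t; ring.
apply: add_cont; [exact: cst_cont | apply: mul_cont; [exact: id_cont | exact: cst_cont]].
Qed.
Lemma pair_cont (f g : R -> R) : continuous f -> continuous g -> continuous (fun t => (f t, g t)).
Proof. move=> hf hg x. apply: (@cvg_pair _ _ _ _ (nbhs (f x)) (nbhs (g x))); [exact: hf | exact: hg]. Qed.

Lemma Gl_planar l : planar (@Gl_adj l).
Proof.
exists (@pp l), (@arcc l); split; [|split].
- move=> [[i a]|] [[j b]|] E //; move: E; rewrite /pp /Phi /qq /= => -[].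
  + move=> E1 E2; have E3 : sw i a = sw j b.
      by apply: (mulfI (x := xw a)); [have H := xw_ge1 a; rewrite gt_eqF //; lra | rewrite {2}E1].
    move: E3; rewrite /sw -!natrM -!natrD => /eqP; rewrite eqr_nat => /eqP E.
    have Ha := ltn_ord a; have Hb := ltn_ord b.
    have Eij : (i : nat) = j by lia.
    have Eab : (a : nat) = b by lia.
    by congr Some; congr pair; apply: val_inj.
  + move=> E _; have H := xw_ge1 a; exfalso; lra.
  + move=> E _; have H := xw_ge1 b; exfalso; lra.
- move=> u v A; split.
  + apply: continuous_subspaceT; rewrite /arcc /Phi /lerp /=.
    apply: pair_cont; [exact: aff_cont | apply: mul_cont; exact: aff_cont].
  + move=> s t; rewrite !in_itv /= => Is It; rewrite /arcc /Phi => -[E1 E2].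
    have [D|D] := eqVneq (qq u v).1 (qq v u).1.
    * have [P Q] := qq_ends A D.
      have K : forall r : R, (1 - r) * (qq u v).1 + r * (qq u v).1 = (qq u v).1.
        by move=> r; ring.
      move: E2; rewrite /lerp /= -D !K => E2.
      apply: aff_inj Q _; apply: (mulfI (x := (qq u v).1)); [by rewrite gt_eqF | exact: E2].
    * exact: aff_inj D E1.
  + rewrite /arcc /pp /Phi /lerp /=; case: u v A => [[i a]|] [[j b]|] //= _; congr (_, _); ring.
  + rewrite /arcc /pp /Phi /lerp /=; case: u v A => [[i a]|] [[j b]|] //= _; congr (_, _); ring.
  + move=> t It x; apply/eqP; rewrite /arcc /pp.
    have P := lerp1_pos A It.
    have NV := nonvert A It.
    move: (lerp (qq u v) (qq v u) t) P NV => L P NV.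
    rewrite /Phi => -[E1 E2].
    case: x E1 E2 => [[k c]|] E1 E2; last by move: P; rewrite E1 /=; lra.
    apply: (NV (k, c)).
    case: L P NV E1 E2 => X S /= P _ E1 E2.
    congr pair => //; apply: (mulfI (x := X)); first by rewrite gt_eqF.
    by rewrite E2 E1.
- move=> u v u' v' A1 A2 Hs s t Is It; rewrite /arcc /pp.
  have C := core A1 A2 Hs Is It.
  move: (lerp (qq u v) (qq v u) s) (lerp (qq u' v') (qq v' u') t) C => L L' C.
  rewrite /Phi => -[E1 E2].
  have [Z|NZ] := eqVneq L.1 0.
    by exists None; rewrite /= Z !mul0r.
  have [x Ex] : exists x : Gl_vertex l, L = qq x x.
    apply: C; move: E1 E2 NZ; case: L => X S; case: L' => X' S' /= <- E2 NZ.
    by congr pair; apply: (mulfI NZ).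
  by exists x; rewrite Ex.
Qed.

End Planar2.

Section Comb.

Lemma dist0 (T : finType) (e : rel T) x : dist e x x = 0.
Proof. by rewrite /dist; case: #|T| => [|n] //=; rewrite eqxx. Qed.

Lemma dist1 (T : finType) (e : rel T) x y : 2 <= #|T| -> x != y -> e x y -> dist e x y = 1.
Proof.
move=> h xy exy; rewrite /dist; case: #|T| h => [|[|n]] // _ /=.
rewrite (negbTE xy) /=.
suff -> : [exists z, (x == z) && e z y] by [].
by apply/existsP; exists x; rewrite eqxx.
Qed.

Lemma dist2 (T : finType) (e : rel T) x y z : 3 <= #|T| -> x != y -> ~~ e x y ->
  e x z -> e z y -> dist e x y = 2.
Proof.
move=> h xy nxy xz zy; rewrite /dist; case: #|T| h => [|[|[|n]]] // _ /=.
rewrite (negbTE xy) /=.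
have -> : [exists z, (x == z) && e z y] = false.
  apply/negbTE/negP => /existsP [w /andP[/eqP <-]]; exact/negP.
suff -> : [exists z0, ((x == z0) || [exists z1, (x == z1) && e z1 z0]) && e z0 y] by [].
apply/existsP; exists z; rewrite zy andbT; apply/orP; right.
by apply/existsP; exists x; rewrite eqxx.
Qed.

Lemma card_Gl l : #|Gl_vertex l| = (3 * l).+1.
Proof. by rewrite /Gl_vertex card_option card_prod !card_ord mulnC. Qed.

Lemma dist_G l (u w : Gl_vertex l) : 1 <= l ->
  dist (@Gl_adj l) u w = if u == w then 0 else if Gl_adj u w then 1 else 2.
Proof.
move=> hl; have hT : 3 <= #|Gl_vertex l| by rewrite card_Gl; lia.
case: eqVneq => [->|uw]; first exact: dist0.
case: ifP => a; first by apply: dist1 => //; lia.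
case: u w uw a => [[i x]|] [[j y]|] //= uw a.
by apply: (dist2 (z := None)) => //; rewrite /= a.
Qed.

Lemma lr_tri l W (i : 'I_l) a b : 1 <= l -> local_resolving (@Gl_adj l) W -> a != b ->
  (Some (i, a) \in W) || (Some (i, b) \in W).
Proof.
move=> hl /forallP H ab; apply/negPn/negP; rewrite negb_or => /andP[na nb].
move: (H (Some (i, a))) => /forallP /(_ (Some (i, b))) /implyP.
rewrite na nb /= eqxx ab => /(_ isT) /existsP [w /andP[wW]].
have wa : w != Some (i, a) by apply: contraNneq na => <-.
have wb : w != Some (i, b) by apply: contraNneq nb => <-.
rewrite /distinguishes !dist_G // [Some (i, a) == w]eq_sym (negbTE wa) [Some (i, b) == w]eq_sym (negbTE wb).
case: w wW wa wb => [[j c]|] //= _ wa wb.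
case: (eqVneq i j) => [E|ij] //.
subst j.
have ac : a != c by apply: contraNneq wa => ->.
have bc : b != c by apply: contraNneq wb => ->.
by rewrite ac bc.
Qed.

Definition pick2 l (W : {set Gl_vertex l}) (i : 'I_l) : 'I_3 * 'I_3 :=
  if Some (i, o0) \in W then (if Some (i, o1) \in W then (o0, o1) else (o0, o2))
  else (o1, o2).

Lemma pick2_lt l W i : ((@pick2 l W i).1 : nat) < (pick2 W i).2.
Proof. by rewrite /pick2; repeat case: ifP. Qed.

Lemma lr_card l W : 1 <= l -> local_resolving (@Gl_adj l) W -> 2 * l <= #|W|.
Proof.
move=> hl lr.
pose f := fun p : 'I_l * 'I_2 =>
  (Some (p.1, if (p.2 : nat) == 0 then (pick2 W p.1).1 else (pick2 W p.1).2) : Gl_vertex l).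
have fW : forall p, f p \in W.
  move=> [i k]; rewrite /f /pick2 /=.
  have h01 := lr_tri i (a := o0) (b := o1) hl lr isT.
  have h02 := lr_tri i (a := o0) (b := o2) hl lr isT.
  have h12 := lr_tri i (a := o1) (b := o2) hl lr isT.
  case: (boolP (Some (i, o0) \in W)) => H0; case: (boolP (Some (i, o1) \in W)) => H1;
  case: ((k : nat) == 0) => /=;
  first [ done | by move: h12; rewrite (negbTE H1) | by move: h01; rewrite (negbTE H0)
        | by move: h02; rewrite (negbTE H0) ].
have finj : injective f.
  move=> [i k] [j k'] /= [Eij]; subst j => E.
  have := pick2_lt W i; move: E.
  case: k => [[|[|k]] hk] //; case: k' => [[|[|k']] hk'] //= E.
  - by move=> _; congr pair; apply: val_inj.
  - by rewrite E ltnn.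
  - by rewrite E ltnn.
  - by move=> _; congr pair; apply: val_inj.
have := subset_leq_card (_ : f @: [set: _] \subset W).
rewrite card_imset // finset.cardsT card_prod !card_ord mulnC; apply.
by apply/fintype.subsetP => x /imsetP [p _ ->].
Qed.

Definition W0 l : {set Gl_vertex l} :=
  [set x : Gl_vertex l | if x is Some (_, a) then (a : nat) != 2 else false].

Lemma card_W0 l : #|W0 l| <= 2 * l.
Proof.
pose f := fun p : 'I_l * 'I_2 => (Some (p.1, widen_ord (isT : 2 <= 3) p.2) : Gl_vertex l).
suff S : W0 l \subset f @: [set: _].
  apply: leq_trans (subset_leq_card S) _.
  by apply: leq_trans (leq_imset_card _ _) _; rewrite finset.cardsT card_prod !card_ord mulnC.
apply/fintype.subsetP => x; rewrite inE; case: x => [[i a]|] // ha.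
have ha2 : (a : nat) < 2 by have := ltn_ord a; lia.
apply/imsetP; exists (i, Ordinal ha2) => //.
by congr Some; congr pair; apply: val_inj.
Qed.

Lemma other l (j : 'I_l) : 1 < l -> exists j' : 'I_l, j' != j.
Proof.
move=> hl; have h0 : 0 < l by lia.
case: (eqVneq (Ordinal h0) j) => [E|]; last by exists (Ordinal h0).
exists (Ordinal hl); apply/eqP => E'; have := congr1 val (etrans E' (esym E)); done.
Qed.

Lemma lr_W0 l : 1 < l -> local_resolving (@Gl_adj l) (W0 l).
Proof.
move=> hl; have hl1 : 1 <= l by lia.
apply/forallP => u; apply/forallP => v; apply/implyP => /and3P[nu nv uv].
move: nu nv uv; rewrite !inE.
case: u => [[i a]|]; case: v => [[j b]|] //=.
- rewrite !negbK => /eqP a2 /eqP b2 /andP[_ ab]; exfalso; move: ab.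
  have -> : a = b by apply: val_inj => /=; rewrite a2 b2.
  by rewrite eqxx.
- move=> _ _ _; have [j' jj] := other i hl.
  apply/existsP; exists (Some (j', o0)); rewrite inE /= /distinguishes !dist_G //=.
  have ne : (Some (i, a) == Some (j', o0) :> Gl_vertex l) = false.
    by apply/negbTE; apply: contraNneq jj => -[-> _].
  by rewrite ne [_ == j']eq_sym (negbTE jj).
- move=> _ _ _; have [j' jj] := other j hl.
  apply/existsP; exists (Some (j', o0)); rewrite inE /= /distinguishes !dist_G //=.
  have ne : (Some (j, b) == Some (j', o0) :> Gl_vertex l) = false.
    by apply/negbTE; apply: contraNneq jj => -[-> _].
  by rewrite ne [_ == j']eq_sym (negbTE jj).
Qed.

Lemma bigmin_le (T : finType) (P : pred T) (F : T -> nat) x0 i :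
  P i -> \big[minn/x0]_(j | P j) F j <= F i.
Proof.
move=> Pi; have : i \in index_enum T by rewrite mem_index_enum.
elim: (index_enum T) => [|j s IH] //=; rewrite big_cons inE.
case/orP => [/eqP <-|ins]; first by rewrite Pi geq_minl.
case: ifP => _; last exact: IH.
exact: leq_trans (geq_minr _ _) (IH ins).
Qed.

Lemma lmd_G l : 2 <= l -> local_metric_dim (@Gl_adj l) = 2 * l.
Proof.
move=> hl; apply/eqP; rewrite eqn_leq; apply/andP; split.
- apply: leq_trans (card_W0 l); rewrite /local_metric_dim.
  by apply: bigmin_le; apply: lr_W0.
- apply: (big_ind (fun m => 2 * l <= m)).
  + rewrite card_Gl; lia.
  + by move=> x y hx hy; rewrite leq_min hx hy.
  + by move=> W lr; apply: lr_card => //; lia.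
Qed.

End Comb.

Theorem mainTheorem7 :
  (forall l : nat, 2 <= l ->
     planar (@Gl_adj l) /\ local_metric_dim (@Gl_adj l) = 2 * l) /\
  (exists (T : finType) (e : rel T),
     [/\ simple_graph e, graph_connected e, planar e &
         (#|T| + 2) %/ 2 < local_metric_dim e]).
Proof.
split.
  by move=> l hl; split; [exact: Gl_planar | exact: lmd_G].
exists (Gl_vertex 4), (@Gl_adj 4); split.
- split.
  + by case => [[i a]|] //=; rewrite !eqxx.
  + by move=> [[i a]|] [[j b]|] //=; rewrite (eq_sym i) (eq_sym a).
- move=> x y; apply: (@connect_trans _ _ None).
  + case: x => [[i a]|]; last exact: connect0.
    by apply: connect1.
  + case: y => [[i a]|]; last exact: connect0.
    by apply: connect1.
- exact: Gl_planar.
- by rewrite lmd_G // card_Gl.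
Qed.
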